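(* Consider the online energy harvesting two-hop status update system described in the context, with service times $d>0$ and $\bar d>0$. Under any feasible policy, the number $N(T)$ of updates received by the destination within time $T$ satisfies $$\limsup_{T\to\infty}\frac{N(T)}{T}\le \min\left\{1,\frac{1}{d+\bar d}\right\}\quad\text{almost surely}.$$
   Context: A source sends status updates to a destination through a half-duplex relay. Energy arrives at the source and at the relay according to two independent Poisson processes of unit rate. Each node has an infinite battery, and at time $0$ each battery holds exactly one energy packet. Transmitting one update consumes one energy packet at the transmitting node, and a node may transmit only if its battery holds at least one packet just before the transmission time (energy causality). An update transmitted by the source at time $t_i$ reaches the relay at time $t_i+d$. The relay forwards it at a time $\bar t_i\ge t_i+d$, and it reaches the destination at time $\bar t_i+\bar d$. The source may transmit the next update only at a time $t_{i+1}\ge\bar t_i+\bar d$. A feasible policy is any choice of such transmission times satisfying these constraints. $N(T)$ is the number of indices $i$ with $\bar t_i+\bar d\le T$. *)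

(* Defs.v *)
From HB Require Import structures.
From mathcomp Require Import all_boot all_order all_algebra.
From mathcomp Require Import all_classical all_reals all_analysis.
Set Implicit Arguments. Unset Strict Implicit. Unset Printing Implicit Defensive.
Import Order.TTheory GRing.Theory Num.Theory.
Import numFieldNormedType.Exports.
Local Open Scope classical_set_scope.
Local Open Scope ring_scope.

Definition mutually_independent (R : realType) (d : measure_display)
  (T : measurableType d) (P : probability T R) (I : eqType)
  (X : I -> {RV P >-> R}) : Prop :=
  forall (J : seq I) (B : I -> set R), uniq J ->
    (forall i, measurable (B i)) ->
    P (\bigcap_(i in [set` J]) (X i @^-1` B i)) =
      (\prod_(i <- J) P (X i @^-1` B i))%E.

(* Time of the k-th energy arrival (k >= 1) of a renewal process with
   inter-arrival times X 0, X 1, ... *)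
Definition arrival (R : realType) (X : nat -> R) (k : nat) : R :=
  \sum_(j < k) X j.

Definition harvested_before (R : realType) (X : nat -> R) (t : R) (n : nat) :=
  forall k, (1 <= k <= n)%N -> arrival X k < t.

(* A transmission schedule: nupd = None means infinitely many updates,
   Some m means updates 0..m-1; src i = t_i, rly i = \bar t_i. *)
Record schedule (R : realType) := Schedule {
  nupd : option nat;
  src : nat -> R;
  rly : nat -> R }.

Definition valid (R : realType) (s : schedule R) (i : nat) : bool :=
  if nupd s is Some m then (i < m)%N else true.

(* Feasibility given energy inter-arrival times X (source) and Y (relay),
   each node having one packet in its battery at time 0: the i-th
   transmission (0-indexed) of a node requires at least i harvested packets
   strictly before it (battery just before = 1 + harvested - i >= 1). *)
Definition feasible (R : realType) (X Y : nat -> R) (d db : R)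
  (s : schedule R) : Prop :=
  forall i, valid s i ->
    [/\ 0 <= src s i,
        src s i + d <= rly s i,
        (valid s i.+1 -> rly s i + db <= src s i.+1),
        harvested_before X (src s i) i
      & harvested_before Y (rly s i) i].

Definition Nrecv (R : realType) (s : schedule R) (db T : R) : \bar R :=
  ereal_sup [set ((size l)%:R)%:E | l in
    [set l : seq nat | uniq l /\
       forall i, i \in l -> valid s i /\ rly s i + db <= T]].

Arguments mutually_independent {R d T} P {I} X.

(* Main.v *)
Require Import Defs.
From HB Require Import structures.
From mathcomp Require Import all_boot all_order all_algebra.
From mathcomp Require Import all_classical all_reals all_analysis.
From mathcomp Require Import ring lra.
Import Order.TTheory GRing.Theory Num.Theory.
Import numFieldNormedType.Exports.
Local Open Scope classical_set_scope.
Local Open Scope ring_scope.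
Set Implicit Arguments. Unset Strict Implicit. Unset Printing Implicit Defensive.
Section RealPart.
Context {R : realType}.

Definition cntR n (f : {ffun 'I_n -> bool}) : R := \sum_(k < n) (f k : nat)%:R.

Lemma sum_pat_bound n (q a s : R) : 0 <= q <= 1 -> 0 <= s ->
  \sum_(f : {ffun 'I_n -> bool} | cntR f < a * n%:R)
     \prod_(k < n) (if f k then q else 1 - q)
  <= expR (s * a * n%:R) * (q * expR (- s) + (1 - q)) ^+ n.
Proof.
move=> /andP[q0 q1] s0.
set w := fun b : bool => if b then q else 1 - q.
have w0 b : 0 <= w b by rewrite /w; case: b => //; lra.
apply: (@le_trans _ _ (\sum_(f : {ffun 'I_n -> bool})
    (\prod_(k < n) w (f k)) * expR (s * (a * n%:R - cntR f)))).
  rewrite [leRHS](bigID (fun f : {ffun 'I_n -> bool} => cntR f < a * n%:R)) /=.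
  rewrite -[leLHS]addr0; apply: lerD; last first.
    by apply: sumr_ge0 => f _; apply: mulr_ge0; [apply: prodr_ge0 => k _; exact: w0 | apply: ltW; apply: expR_gt0].
  apply: ler_sum => f hf.
  rewrite -[leLHS]mulr1; apply: ler_wpM2l; first by apply: prodr_ge0 => k _; exact: w0.
  rewrite -[leLHS]expR0 ler_expR; apply: mulr_ge0 => //; rewrite subr_ge0; exact: ltW.
have -> : \sum_(f : {ffun 'I_n -> bool}) (\prod_(k < n) w (f k)) * expR (s * (a * n%:R - cntR f))
   = expR (s * a * n%:R) * \sum_(f : {ffun 'I_n -> bool}) \prod_(k < n) (w (f k) * expR (- s * (f k : nat)%:R)).
  rewrite mulr_sumr; apply: eq_bigr => f _.
  rewrite big_split /= /cntR mulrBr expRD -mulNr mulr_sumr expR_sum; by rewrite (mulrA s a) mulrCA.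
apply: ler_wpM2l; first exact: ltW (expR_gt0 _).
rewrite -(bigA_distr_bigA (fun (k : 'I_n) (b : bool) => w b * expR (- s * (b : nat)%:R))) /=.
rewrite big_bool /= prodr_const card_ord /w mulr1 mulr0 expR0 mulr1.
by rewrite mulrC.
Qed.

End RealPart.
Section RealPart2.
Context {R : realType}.

Lemma rate_bound n (q dl : R) : 0 <= q <= 1 -> 0 < dl ->
  expR (dl / 2 * (q - dl) * n%:R) * (q * expR (- (dl / 2)) + (1 - q)) ^+ n
  <= expR (- (dl ^+ 2 / 4)) ^+ n.
Proof.
move=> /andP[q0 q1] dl0; set s := dl / 2; set E := expR (- s).
have s0 : 0 <= s by rewrite /s; lra.
have E0 : 0 < E := expR_gt0 _.
have E1 : 1 - s <= E by have := expR_ge1Dx (- s); rewrite /E; lra.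
have E2 : E * (1 + s) <= 1.
  have := expR_ge1Dx s => h.
  have : E * expR s = 1 by rewrite /E -expRD addNr expR0.
  move=> e; rewrite -[leRHS]e; apply: ler_wpM2l; [exact: ltW|exact: h].
have base0 : 0 <= q * E + (1 - q) by nra.
have base1 : q * E + (1 - q) <= expR (- (q * (1 - E))).
  by have := expR_ge1Dx (- (q * (1 - E))); lra.
apply: (@le_trans _ _ (expR (s * (q - dl) * n%:R) * expR (- (q * (1 - E))) ^+ n)).
  apply: ler_wpM2l; first exact: ltW (expR_gt0 _).
  apply: lerXn2r => //; rewrite nnegrE //; exact: ltW (expR_gt0 _).
rewrite expRM_natr -exprMn -expRD.
apply: lerXn2r; rewrite ?nnegrE; try exact: ltW (expR_gt0 _).
rewrite ler_expR.
have h1 : 1 - E >= s * (1 - s) by nra.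
have h2 : q * (1 - E) >= q * s * (1 - s) by nra.
have h3 : q * s * s <= s * s by nra.
rewrite /s in h1 h2 h3 *; nra.
Qed.

End RealPart2.
Section Geom.
Context {R : realType}.
Lemma geom_partial (rho : R) n : 0 <= rho < 1 ->
  \sum_(0 <= i < n) rho ^+ i <= (1 - rho)^-1.
Proof.
move=> /andP[r0 r1].
have id : (1 - rho) * \sum_(0 <= i < n) rho ^+ i = 1 - rho ^+ n.
  elim: n => [|n IH]; first by rewrite big_geq // expr0 mulr0 subrr.
  by rewrite big_nat_recr //= mulrDr IH exprS; ring.
have h : 0 < 1 - rho by lra.
rewrite -(ler_pM2l h) mulfV ?gt_eqF // id.
have : 0 <= rho ^+ n by apply: exprn_ge0.
lra.
Qed.
End Geom.

Lemma in_bigsetU (T : Type) (I : eqType) (r : seq I) (Pr : pred I) (A : I -> set T) i x :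
  i \in r -> Pr i -> A i x -> (\big[setU/set0]_(j <- r | Pr j) A j) x.
Proof.
elim: r => // h t IH; rewrite inE big_cons => /orP[/eqP<-|it] Pi Ax.
  by rewrite Pi; left.
by case: ifP => _; [right|]; exact: IH.
Qed.

Section Bernoulli.
Context {R : realType} {dm : measure_display} {Omega : measurableType dm}
  (P : probability Omega R).

Lemma fin_boole (I : Type) (r : seq I) (Pr : pred I) (F : I -> set Omega) :
  (forall i, measurable (F i)) ->
  (P (\big[setU/set0]_(i <- r | Pr i) F i) <= \sum_(i <- r | Pr i) P (F i))%E.
Proof.
move=> mF.
suff : measurable (\big[setU/set0]_(i <- r | Pr i) F i) /\
  (P (\big[setU/set0]_(i <- r | Pr i) F i) <= \sum_(i <- r | Pr i) P (F i))%E by case.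
elim/big_rec2 : _ => [|i A s Pi [mA Hs]]; first by rewrite measure0.
split; first exact: measurableU.
apply: le_trans (measureU2 _ _ _) _ => //; exact: leeD.
Qed.

Variables (E : nat -> Omega -> bool) (q : R).
Hypothesis q01 : 0 <= q <= 1.
Definition pat n (f : {ffun 'I_n -> bool}) : set Omega :=
  [set w | forall k : 'I_n, E k w = f k].
Hypothesis Hpat : forall n (f : {ffun 'I_n -> bool}),
  measurable (pat f) /\
  P (pat f) = (\prod_(k < n) (if f k then q else 1 - q))%:E.

Lemma bernoulli_lln dl : 0 < dl ->
  {ae P, forall w, exists n0, forall n, (n0 <= n)%N ->
     (q - dl) * n%:R <= \sum_(j < n) (E j w : nat)%:R}.
Proof.
move=> dl0.
set a := q - dl.
pose F n := \big[setU/set0]_(f : {ffun 'I_n -> bool} | cntR f < a * n%:R) pat f.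
have mF n : measurable (F n).
  by apply: bigsetU_measurable => f _; case: (Hpat f).
set rho := expR (- (dl ^+ 2 / 4)) : R.
have rho01 : 0 <= rho < 1.
  apply/andP; split; first exact: ltW (expR_gt0 _).
  rewrite /rho -[X in _ < X]expR0 ltr_expR.
  have : 0 < dl ^+ 2 by apply: exprn_gt0.
  lra.
have PF n : (P (F n) <= (rho ^+ n)%:E)%E.
  apply: le_trans (fin_boole _ _ _) _; first by move=> f; case: (Hpat f).
  rewrite (eq_bigr (fun f : {ffun 'I_n -> bool} =>
     (\prod_(k < n) (if f k then q else 1 - q))%:E)); last first.
    by move=> f _; case: (Hpat f).
  rewrite sumEFin lee_fin.
  have s0 : 0 <= dl / 2 by apply: divr_ge0 => //; apply: ltW.
  apply: le_trans (@sum_pat_bound R n q a (dl / 2) q01 s0) _.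
  exact: rate_bound.
have sumfin : (\sum_(0 <= n <oo) P (F n) < +oo)%E.
  apply: (@le_lt_trans _ _ ((1 - rho)^-1)%:E); last exact: ltry.
  apply: lime_le; first by apply: is_cvg_nneseries => n _ _; exact: measure_ge0.
  apply: nearW => n.
  apply: (@le_trans _ _ (\sum_(0 <= i < n) (rho ^+ i)%:E)%E).
    by apply: lee_sum => i _; exact: PF.
  by rewrite sumEFin lee_fin; exact: geom_partial.
have P0 : P (lim_sup_set F) = 0%E by apply: lim_sup_set_cvg0.
exists (lim_sup_set F); split => //.
  apply: bigcapT_measurable => k; apply: bigcup_measurable => j _; exact: mF.
move=> w /= nex n _.
have : ~ (forall j, (n <= j)%N -> a * j%:R <= \sum_(k < j) (E k w : nat)%:R).
  by move=> h; apply: nex; exists n.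
move=> /existsNP [j] /not_implyP [nj /negP]; rewrite -ltNge => hj.
exists j => //.
pose fw := [ffun k : 'I_j => E k w].
apply: (@in_bigsetU _ _ _ _ _ fw); first exact: mem_index_enum.
  by rewrite /cntR; under eq_bigr do rewrite ffunE.
by move=> k; rewrite ffunE.
Qed.

End Bernoulli.
Section Expo.
Context {R : realType}.
Local Open Scope ereal_scope.

Lemma expo_neg : exponential_prob (1 : R) [set` `]-oo, 0[%R] = 0.
Proof.
rewrite /exponential_prob integral0_eq // => x /=; rewrite in_itv /= => x0.
by rewrite lt0_exponential_pdf.
Qed.

Lemma expo_tail (c : R) : (0 < c)%R ->
  exponential_prob (1 : R) [set` `]c, +oo[%R] = (expR (- c))%:E.
Proof.
move=> c0.
have mC : measurable [set` `]-oo, c]%R] by exact: measurable_itv.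
rewrite -setCitvl probability_setC //.
rewrite (@itv_bndbnd_setU _ _ _ (BLeft 0%R)) //; last by rewrite bnd_simp; exact: ltW.
set mu := (X in 1 - X _ = _). set A := (X in mu (X `|` _)). set B := (X in mu (_ `|` X)).
have -> : mu (A `|` B) = mu A + mu B.
  apply: measureU; try exact: measurable_itv.
  apply/seteqP; split => x //=; rewrite /A /B /= !in_itv /= => -[] x0 /andP[] x0' _.
  by move: x0 x0'; rewrite leNgt => ->.
have -> : mu A = 0 by exact: expo_neg.
have -> : mu B = 1 - (expR (- 1 * c))%:E by exact: exponential_prob_itv0c.
by rewrite add0e mulN1r oppeB // addeA subee // add0e.
Qed.

End Expo.
Section Indep.
Context {R : realType} {dm : measure_display} {Omega : measurableType dm}
  (P : probability Omega R) (X Y : nat -> {RV P >-> R}).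
Hypothesis HX : forall n, distribution P (X n) = exponential_prob (1 : R).
Hypothesis Hind : mutually_independent P
    (fun b : bool * nat => if b.1 then Y b.2 else X b.2).

Lemma mpre (n : nat) (A : set R) : measurable A -> measurable (X n @^-1` A).
Proof. by move=> mA; rewrite -[X n @^-1` A]setTI; exact: measurable_funP. Qed.

Lemma probX (n : nat) (A : set R) : measurable A ->
  P (X n @^-1` A) = exponential_prob (1 : R) A.
Proof.
move=> mA; exact: (congr1 (fun m => m A) (HX n)).
Qed.

Lemma X_neg n : P (X n @^-1` [set` `]-oo, 0[%R]) = 0%E.
Proof. by rewrite probX ?expo_neg //; exact: measurable_itv. Qed.

End Indep.
Section Indep2.
Context {R : realType} {dm : measure_display} {Omega : measurableType dm}
  (P : probability Omega R) (X Y : nat -> {RV P >-> R}).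
Hypothesis HX : forall n, distribution P (X n) = exponential_prob (1 : R).
Hypothesis Hind : mutually_independent P
    (fun b : bool * nat => if b.1 then Y b.2 else X b.2).

Lemma pat_X (c : R) : 0 < c -> forall n (f : {ffun 'I_n -> bool}),
  measurable (pat (fun k w => c < X k w) f) /\
  P (pat (fun k w => c < X k w) f) =
    (\prod_(k < n) (if f k then expR (- c) else 1 - expR (- c)))%:E.
Proof.
move=> c0 n f.
set A := [set` `]c, +oo[%R] : set R.
have mA : measurable A by exact: measurable_itv.
pose J := [seq (false, val k) | k <- enum 'I_n].
pose B := fun i : bool * nat =>
  if (insub i.2 : option 'I_n) is Some k then (if f k then A else ~` A) else setT.
have mB i : measurable (B i).
  rewrite /B; case: insub => [k|] //; case: (f k) => //; exact: measurableC.
have uJ : uniq J.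
  by rewrite map_inj_uniq ?enum_uniq // => k k' [] /val_inj.
have key := Hind uJ mB.
have Eset : \bigcap_(i in [set` J]) ((if i.1 then Y i.2 else X i.2) @^-1` B i) =
    pat (fun k w => c < X k w) f.
  apply/seteqP; split => w /=.
  - move=> H k.
    have := H (false, val k); rewrite /B /= valK /=.
    have Jk : (false, val k) \in J by rewrite map_f // mem_enum.
    move=> /(_ Jk).
    rewrite /A /=; case: (f k) => /=; first by rewrite in_itv /= andbT.
    by rewrite in_itv /= andbT => /negP /negbTE.
  - move=> H i /mapP [k _ ->] /=.
    rewrite /B /= valK /A /=; move: (H k); case: (f k) => /= hk.
      by rewrite in_itv /= andbT hk.
    by rewrite in_itv /= andbT hk.
rewrite -Eset; split.
  apply: (fin_bigcap_measurable (finite_seq J)) => i _.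
  case: i.1; rewrite -[_ @^-1` _]setTI; exact: measurable_funP.
rewrite key big_map /=.
rewrite (eq_bigr (fun k : 'I_n => (if f k then expR (- c) else 1 - expR (- c))%:E)).
  rewrite prodEFin big_enum /=; congr EFin; apply: eq_bigl => k; by rewrite inE.
move=> k _; rewrite /B /= valK.
case: (f k); first by rewrite probX // expo_tail.
rewrite -preimage_setC probability_setC; last exact: mpre.
by rewrite probX // expo_tail // EFinB.
Qed.
End Indep2.
Section RealPart3.
Context {R : realType}.

Lemma level_sum (h : R) (K : nat) (x : R) : 0 < h -> 0 <= x ->
  h * \sum_(k < K) (nat_of_bool (k.+1%:R * h < x))%:R <= x.
Proof.
move=> h0; elim: K x => [|K IH] x x0; first by rewrite big_ord0 mulr0.
rewrite big_ord_recl /=.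
have e : forall k : 'I_K, ((bump 0 k).+1%:R * h < x) = (k.+1%:R * h < x - h).
  move=> k; rewrite /bump /= add1n -[(k.+2)]addn1 natrD mulrDl mul1r.
  by rewrite ltrBrDr.
under eq_bigr do rewrite e.
have [hx|hx] := ltP h x.
  rewrite mul1r hx /= mulrDr mulr1.
  have := IH (x - h); rewrite subr_ge0 => /(_ (ltW hx)); lra.
rewrite mul1r ltNge hx /= add0r big1 ?mulr0 // => k _.
have -> : (k.+1%:R * h < x - h) = false.
  apply/negbTE; rewrite -leNgt; apply: (@le_trans _ _ 0); first lra.
  by apply: mulr_ge0 => //; exact: ltW.
by [].
Qed.

Lemma geom_lower (h : R) K : 0 < h ->
  1 - h - expR (- h) ^+ K <= h * \sum_(k < K) expR (- h) ^+ k.+1.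
Proof.
move=> h0; set r := expR (- h).
have r0 : 0 < r := expR_gt0 _.
have r1 : 1 - h <= r by have := expR_ge1Dx (- h); rewrite /r; lra.
have rle1 : r <= 1 by rewrite /r -[leRHS]expR0 ler_expR; lra.
have id : (1 - r) * \sum_(k < K) r ^+ k.+1 = r - r ^+ K.+1.
  elim: K => [|K IH]; first by rewrite big_ord0 mulr0 expr1 subrr.
  by rewrite big_ord_recr /= mulrDr IH !exprS; ring.
have S0 : 0 <= \sum_(k < K) r ^+ k.+1 by apply: sumr_ge0 => k _; exact: exprn_ge0 (ltW r0).
have rK0 : 0 <= r ^+ K := exprn_ge0 K (ltW r0).
have rK1 : r ^+ K <= 1 by apply: exprn_ile1 => //; exact: ltW.
have : (1 - r) * \sum_(k < K) r ^+ k.+1 <= h * \sum_(k < K) r ^+ k.+1.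
  by apply: ler_wpM2r => //; lra.
rewrite id exprS.
nra.
Qed.

Lemma expK_small (h dl : R) K : 0 < h -> 0 < dl -> 4 <= K%:R * h * dl ->
  expR (- h) ^+ K <= dl / 4.
Proof.
move=> h0 dl0 HK.
rewrite -expRM_natl.
set E := expR _.
have E0 : 0 < E := expR_gt0 _.
have E1 : E * (1 + K%:R * h) <= 1.
  have := expR_ge1Dx (K%:R * h) => e1.
  have e : E * expR (K%:R * h) = 1 by rewrite /E -expRD mulrN addNr expR0.
  rewrite -[leRHS]e; apply: ler_wpM2l => //; exact: ltW.
have Kh0 : 0 <= K%:R * h by apply: mulr_ge0 => //; exact: ltW.
nra.
Qed.

Lemma exists_max (Q : nat -> nat -> Prop) K :
  (forall k, (k < K)%N -> exists n0, forall n, (n0 <= n)%N -> Q k n) ->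
  exists N, forall k, (k < K)%N -> forall n, (N <= n)%N -> Q k n.
Proof.
elim: K => [|K IH] H; first by exists 0%N.
have [N1 HN1] : exists N, forall k, (k < K)%N -> forall n, (N <= n)%N -> Q k n.
  by apply: IH => k kK; apply: H; exact: ltnW.
have [N2 HN2] := H K (ltnSn K).
exists (maxn N1 N2) => k; rewrite ltnS leq_eqVlt => /orP[/eqP ->|kK] n.
  by rewrite geq_max => /andP[_]; exact: HN2.
by rewrite geq_max => /andP[h _]; exact: HN1.
Qed.

End RealPart3.
Section Combine.
Context {R : realType} {dm : measure_display} {Omega : measurableType dm}
  (P : probability Omega R) (X Y : nat -> {RV P >-> R}).
Hypothesis HX : forall n, distribution P (X n) = exponential_prob (1 : R).
Hypothesis Hind : mutually_independent P
    (fun b : bool * nat => if b.1 then Y b.2 else X b.2).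

Lemma arrival_lower (dl : R) : 0 < dl -> dl <= 1 ->
  {ae P, forall w, exists n0, forall n, (n0 <= n)%N ->
     (1 - dl) * n%:R <= arrival (fun j => X j w) n}.
Proof.
move=> dl0 dl1.
set h := dl / 4.
have h0 : 0 < h by rewrite /h; lra.
have [K HK] : exists K : nat, 16 / dl ^+ 2 < K%:R by eexists; exact: truncnS_gt.
have dl20 : 0 < dl ^+ 2 by apply: exprn_gt0.
have HK' : 16 < K%:R * dl ^+ 2 by rewrite -ltr_pdivrMr.
have K0 : 0 < K%:R :> R.
  apply: (@lt_trans _ _ (16 / dl ^+ 2)) => //; apply: divr_gt0 => //; lra.
have HKh : 4 <= K%:R * h * dl by rewrite /h; rewrite expr2 in HK'; nra.
set r := expR (- h).
have BLk : forall k, {ae P, forall w, (k < K)%N -> exists n0, forall n, (n0 <= n)%N ->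
    (r ^+ k.+1 - K%:R^-1) * n%:R <=
      \sum_(j < n) (nat_of_bool (k.+1%:R * h < X j w))%:R}.
  move=> k.
  have c0 : 0 < k.+1%:R * h by apply: mulr_gt0.
  have q01 : 0 <= expR (- (k.+1%:R * h)) <= 1.
    apply/andP; split; first exact: ltW (expR_gt0 _).
    by rewrite -[leRHS]expR0 ler_expR; lra.
  have Kinv0 : 0 < K%:R^-1 :> R by rewrite invr_gt0.
  have := bernoulli_lln q01 (pat_X HX Hind c0) Kinv0.
  apply: filterS => w H _.
  by rewrite /r -expRM_natl mulrN.
have Hall := ae_foralln BLk.
have Hnn : {ae P, forall w, forall j, 0 <= X j w}.
  apply: ae_foralln => j.
  exists (X j @^-1` [set` `]-oo, 0[%R]); split.
  - apply: mpre; exact: measurable_itv.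
  - exact: X_neg.
  - by move=> w /= /negP; rewrite -ltNge in_itv /=.
move: Hall Hnn; apply: filterS2 => w H1 H2.
have [N HN] := @exists_max (fun k n => (r ^+ k.+1 - K%:R^-1) * n%:R <=
      \sum_(j < n) (nat_of_bool (k.+1%:R * h < X j w))%:R) K (fun k kK => H1 k kK).
exists N => n Nn.
rewrite /arrival.
have step1 : (1 - dl) * n%:R <= h * \sum_(k < K) (r ^+ k.+1 - K%:R^-1) * n%:R.
  rewrite -mulr_suml big_split /= sumrN sumr_const card_ord -[_ *+ K]mulr_natl mulfV; last exact: lt0r_neq0.
  have g1 := geom_lower K h0.
  have g2 := expK_small h0 dl0 HKh.
  rewrite -/r in g1 g2.
  have n0 : 0 <= n%:R :> R by [].
  rewrite mulrA; apply: ler_wpM2r => //.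
  rewrite mulrBr mulr1; rewrite /h in g1 g2 *; lra.
apply: (le_trans step1).
apply: (@le_trans _ _ (h * \sum_(k < K) \sum_(j < n) (nat_of_bool (k.+1%:R * h < X j w))%:R)).
  apply: ler_wpM2l; first exact: ltW.
  by apply: ler_sum => k _; apply: HN.
rewrite exchange_big mulr_sumr /=.
by apply: ler_sum => j _; apply: level_sum.
Qed.

End Combine.
Section Det.
Context {R : realType}.
Variables (x y : nat -> R) (d db : R) (s : schedule R).
Hypotheses (d0 : 0 < d) (db0 : 0 < db) (Hf : feasible x y d db s).

Lemma valid_pred i : valid s i.+1 -> valid s i.
Proof. by rewrite /valid; case: (nupd s) => // m; exact: ltnW. Qed.

Lemma rly_lb i : valid s i -> i%:R * (d + db) + d <= rly s i.
Proof.
elim: i => [|i IH] vi.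
  by have [h1 h2 _ _ _] := Hf vi; rewrite mul0r add0r; lra.
have vi' := valid_pred vi.
have [_ _ h3 _ _] := Hf vi'.
have [_ h2 _ _ _] := Hf vi.
have := IH vi'; have := h3 vi.
rewrite -natr1 mulrDl mul1r; lra.
Qed.

Lemma size_bound (l : seq nat) m : uniq l -> (forall i, i \in l -> (i < m)%N) ->
  (size l <= m)%N.
Proof.
move=> ul H; rewrite -(size_iota 0 m); apply: uniq_leq_size => // i il.
by rewrite mem_iota add0n /=; exact: H.
Qed.

Lemma Nrecv_ub1 T : 0 <= T -> (Nrecv s db T <= (T / (d + db))%:E)%E.
Proof.
move=> T0; apply: ge_ereal_sup => _ [l [ul Hl] <-]; rewrite lee_fin.
have ddb : 0 < d + db by apply: addr_gt0.
have z0 : 0 <= T / (d + db) by apply: divr_ge0 => //; lra.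
apply: (@le_trans _ _ (Num.truncn (T / (d + db)))%:R); last by rewrite truncn_le.
rewrite ler_nat; apply: size_bound => // i il.
have [vi ri] := Hl i il.
rewrite truncn_gt_nat ler_pdivlMr //.
have := rly_lb vi; rewrite -natr1 mulrDl mul1r; lra.
Qed.

Lemma Nrecv_ub2 (dl : R) n0 T : 0 < dl < 1 -> 0 <= T ->
  (forall n, (n0 <= n)%N -> (1 - dl) * n%:R <= arrival x n) ->
  (Nrecv s db T <= (n0%:R + T / (1 - dl) + 1)%:E)%E.
Proof.
move=> /andP[dl0 dl1] T0 Harr; apply: ge_ereal_sup => _ [l [ul Hl] <-]; rewrite lee_fin.
have z0 : 0 <= T / (1 - dl) by apply: divr_ge0 => //; lra.
set m := (n0 + Num.truncn (T / (1 - dl))).+1.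
apply: (@le_trans _ _ m%:R).
  rewrite ler_nat; apply: size_bound => // i il.
  have [vi ri] := Hl i il.
  rewrite /m ltnS.
  case: (ltnP i n0) => [iln|nle]; first by apply: leq_trans (ltnW iln) (leq_addr _ _).
  case: i il vi ri nle => [|i] il vi ri nle; first by [].
  apply: leq_trans (leq_addl n0 _).
  rewrite truncn_ge_nat // ler_pdivlMr; last lra.
  have [h1 h2 _ h4 _] := Hf vi.
  have ha : arrival x i.+1 < src s i.+1 by apply: h4; rewrite leqnn.
  have := Harr _ nle.
  move=> hh; rewrite mulrC; apply: (le_trans hh); apply: ltW; apply: (lt_le_trans ha); apply: (le_trans _ ri); apply: (@le_trans _ _ (rly s i.+1)); [apply: (le_trans _ h2); rewrite lerDl; exact: ltW | rewrite lerDl; exact: ltW].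
rewrite /m -natr1 natrD; apply: lerD => //; apply: lerD => //.
by rewrite truncn_le.
Qed.

End Det.
Section Det2.
Context {R : realType}.
Variables (x y : nat -> R) (d db : R) (s : schedule R).
Hypotheses (d0 : 0 < d) (db0 : 0 < db) (Hf : feasible x y d db s).
Hypothesis Harr : forall m : nat, exists n0, forall n, (n0 <= n)%N ->
  (1 - (m.+2%:R)^-1) * n%:R <= arrival x n.

Lemma limsup_bound :
  (limf_esup (fun T : R => (Nrecv s db T * (T^-1)%:E)%E) +oo%R
     <= (Num.min 1 (d + db)^-1)%:E)%E.
Proof.
rewrite EFin_min le_min; apply/andP; split.
- apply/lee_addgt0Pr => e e0.
  pose m := Num.truncn (2 / e).
  have a0 : 0 < m.+1%:R :> R by [].
  have hm : 2 / e < m.+1%:R by exact: truncnS_gt.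
  rewrite ltr_pdivrMr // in hm.
  have [n0 Hn0] := Harr m.
  set dl := (m.+2%:R)^-1 : R.
  have e2 : m.+2%:R = m.+1%:R + 1 :> R by rewrite -natr1.
  have dl01 : 0 < dl < 1.
    rewrite /dl invr_gt0 ltr0n /= invf_lt1 //; rewrite e2; lra.
  have u : (1 - dl)^-1 <= 1 + e / 2.
    have -> : (1 - dl)^-1 = 1 + (m.+1%:R)^-1.
      rewrite /dl e2; field.
      by apply/andP; split; apply: lt0r_neq0 => //; lra.
    rewrite lerD2l -(ler_pM2l a0) mulfV ?lt0r_neq0 //; nra.
  apply: (le_trans (ereal_inf_lbound _)).
    exists [set T | 2 * (n0%:R + 1) / e < T] => //.
    by exists (2 * (n0%:R + 1) / e); split => //; exact: num_real.
  apply: ge_ereal_sup => _ [T VT <-].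
  have M0 : 0 < 2 * (n0%:R + 1) / e by apply: divr_gt0 => //; lra.
  have T0 : 0 < T by apply: lt_trans VT.
  apply: (@le_trans _ _ ((n0%:R + T / (1 - dl) + 1)%:E * (T^-1)%:E)%E).
    apply: lee_wpmul2r; first by rewrite lee_fin invr_ge0 ltW.
    exact: (Nrecv_ub2 d0 db0 Hf dl01 (ltW T0) Hn0).
  rewrite -EFinM -EFinD lee_fin.
  rewrite ler_pdivrMr //.
  rewrite /= ltr_pdivrMr // in VT.
  have : T / (1 - dl) <= T * (1 + e / 2) by apply: ler_wpM2l => //; exact: ltW.
  nra.
- apply: (le_trans (ereal_inf_lbound _)).
    exists [set T | 0 < T] => //.
    by exists 0; split => //; exact: num_real.
  apply: ge_ereal_sup => _ [T T0 <-].
  apply: (@le_trans _ _ ((T / (d + db))%:E * (T^-1)%:E)%E).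
    apply: lee_wpmul2r; first by rewrite lee_fin invr_ge0 ltW.
    exact: (Nrecv_ub1 d0 db0 Hf (ltW T0)).
  rewrite -EFinM lee_fin mulrAC mulfV ?mul1r //; exact: lt0r_neq0.
Qed.

End Det2.
Unset Implicit Arguments.

Theorem lemma6 (R : realType) (dm : measure_display) (Omega : measurableType dm)
  (P : probability Omega R) (X Y : nat -> {RV P >-> R}) (d db : R) :
  0 < d -> 0 < db ->
  (forall n, distribution P (X n) = exponential_prob (1 : R)) ->
  (forall n, distribution P (Y n) = exponential_prob (1 : R)) ->
  mutually_independent P
    (fun b : bool * nat => if b.1 then Y b.2 else X b.2) ->
  forall pol : Omega -> schedule R,
    (forall w, feasible (fun n => X n w) (fun n => Y n w) d db (pol w)) ->
    {ae P, forall w,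
      (limf_esup (fun T : R => (Nrecv (pol w) db T * (T^-1)%:E)%E) +oo%R
         <= (Num.min 1 (d + db)^-1)%:E)%E}.
Proof.
move=> d0 db0 HX HY Hind pol Hfeas.
have H : {ae P, forall w, forall m : nat, exists n0, forall n, (n0 <= n)%N ->
    (1 - (m.+2%:R)^-1) * n%:R <= arrival (fun j => X j w) n}.
  apply: ae_foralln => m.
  apply: (arrival_lower HX Hind).
  - by rewrite invr_gt0.
  - by rewrite invf_le1 // ler1n.
move: H; apply: filterS => w Hw.
exact: (limsup_bound d0 db0 (Hfeas w) Hw).
Qed.
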